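(* Let $n,k$ be positive integers with $n\ge 3k$, put $C=n/k$, and let $\mathcal F\subset\binom{[n]}{k}$ be an intersecting family with $|\mathcal D(\mathcal F)|>\sum_{0\le \ell<k}\binom{n-1}{\ell}$. Then $$|\mathcal D^{(k-1)}(\mathcal F)|>\Big(1-\frac{2}{(C-1)^2}\Big)\binom{n-1}{k-1}\quad\text{and}\quad |\mathcal D^{(k-1)}(\mathcal F)|\ge\Big(1-\frac 2C\Big)\binom{n}{k-1}.$$
   Context: $[n]=\{1,\dots,n\}$; $\binom{[n]}{k}$ is the family of all $k$-element subsets of $[n]$. A family $\mathcal F$ is intersecting if $F\cap F'\neq\varnothing$ for all $F,F'\in\mathcal F$. $\mathcal D(\mathcal F):=\{F\setminus F' : F,F'\in\mathcal F\}$ and $\mathcal D^{(\ell)}(\mathcal F):=\{D\in\mathcal D(\mathcal F): |D|=\ell\}$. *)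

(* Defs.v *)
From mathcomp Require Import all_boot all_order all_algebra.
Set Implicit Arguments. Unset Strict Implicit. Unset Printing Implicit Defensive.

(* Ground set [n] is modelled by 'I_n. *)
Definition intersecting (T : finType) (F : {set {set T}}) : bool :=
  [forall A in F, forall B in F, A :&: B != set0].

Definition diffFamily (T : finType) (F : {set {set T}}) : {set {set T}} :=
  [set A :\: B | A in F, B in F].

Definition diffFamilyL (T : finType) (F : {set {set T}}) (l : nat) : {set {set T}} :=
  [set D in diffFamily F | #|D| == l].

(* Main.v *)
Require Import Defs.
From mathcomp Require Import all_boot all_order all_algebra.
From mathcomp Require Import zify ring.
Set Implicit Arguments. Unset Strict Implicit. Unset Printing Implicit Defensive.
From mathcomp Require Import lra.
Import Order.TTheory GRing.Theory Num.Theory.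
Lemma pascal_sum N m : (\sum_(0<=l<m.+1) 'C(N.+1,l) =
  \sum_(0<=l<m.+1) 'C(N,l) + \sum_(0<=l<m) 'C(N,l))%N.
Proof.
elim: m => [|m IH]; first by rewrite !big_nat1 big_geq // !bin0.
rewrite big_nat_recr //= IH binS [X in _ = X]addnC.
rewrite [\sum_(0 <= l < m.+2) _]big_nat_recr //= [\sum_(0 <= l < m.+1) 'C(N,l) in RHS]big_nat_recr //=.
have E : (\sum_(0<=l<m.+1) 'C(N,l) = \sum_(0<=l<m) 'C(N,l) + 'C(N,m))%N by rewrite big_nat_recr.
rewrite !E. lia.
Qed.

Lemma tail_bound N m : (3 * m <= N -> \sum_(0<=l<m.+1) 'C(N,l) <= 2*'C(N,m))%N.
Proof.
elim: m => [|m IH] H; first by rewrite big_nat1 bin0.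
rewrite big_nat_recr //=.
have H1 := IH ltac:(lia).
have H2 := mul_bin_left N m.
have H3 : (m.+1 * 'C(N, m.+1) >= 2 * (m.+1) * 'C(N, m))%N.
  rewrite H2; apply: leq_mul => //; lia.
have H4 : (2 * 'C(N, m) <= 'C(N, m.+1))%N.
  rewrite -(leq_pmul2l (ltn0Sn m)). lia.
lia.
Qed.
Lemma ineq1 a P X Y Z : ((a+1)*Y = (P+2*a+8)*X -> (a+2)*Z = (P+2*a+7)*Y ->
  X*(P+2*a+6)^2 <= (a+3)^2*Z)%N.
Proof.
move=> h1 h2.
rewrite -(@leq_pmul2l ((a+1)*(a+2))); last by lia.
have -> : ((a + 1) * (a + 2) * ((a + 3) ^ 2 * Z) = (a+3)^2 * (a+1) * ((a+2)*Z))%N by ring.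
rewrite h2.
have -> : ((a + 3) ^ 2 * (a + 1) * ((P + 2 * a + 7) * Y) = (a+3)^2 * (P + 2 * a + 7) * ((a+1)*Y))%N by ring.
rewrite h1. nia.
Qed.
Lemma ineq2 a P X Y Z : ((a+1)*Y = (P+2*a+8)*X -> (a+2)*Z = (P+2*a+7)*Y ->
  (P+a+3)*Y + 2*(P+3*a+9)*X <= 2*(a+3)*Z)%N.
Proof.
move=> h1 h2.
rewrite -(@leq_pmul2l ((a+1)*(a+2))); last by lia.
have -> : ((a + 1) * (a + 2) * (2*(a + 3) * Z) = 2*(a+3) * (a+1) * ((a+2)*Z))%N by ring.
rewrite h2.
have -> : (2*(a + 3) * (a + 1) * ((P + 2 * a + 7) * Y) = 2*(a+3) * (P + 2 * a + 7) * ((a+1)*Y))%N by ring.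
have -> : ((a + 1) * (a + 2) * ((P + a + 3) * Y + 2 * (P + 3 * a + 9) * X) = 
   (a + 2) * (P + a + 3) * ((a+1)*Y) + (a + 1) * (a + 2) * 2 * (P + 3 * a + 9) * X)%N by ring.
rewrite h1. nia.
Qed.
Lemma sum_eq_lt x k : (\sum_(0 <= l < k) (x == l) = (x < k))%N.
Proof.
elim: k => [|k IH]; first by rewrite big_geq.
rewrite big_nat_recr //= IH; lia.
Qed.

Lemma D_bound n k (F : {set {set 'I_n}}) : (0 < k)%N ->
  (forall A, A \in F -> #|A| = k) -> intersecting F ->
  (#|diffFamily F| <= #|diffFamilyL F k.-1| + \sum_(0<=l<k.-1) 'C(n,l))%N.
Proof.
move=> k0 Hk /forallP Hi.
have Hsz : forall D, D \in diffFamily F -> (#|D| < k)%N.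
  move=> D /imset2P [A B AF BF ->].
  have := Hi A; rewrite AF /= => /forallP /(_ B); rewrite BF /= => hAB.
  rewrite cardsD Hk //.
  have : (0 < #|A :&: B|)%N by rewrite card_gt0.
  lia.
have E : #|diffFamily F| = (\sum_(0 <= l < k) #|diffFamilyL F l|)%N.
  rewrite -sum1_card.
  transitivity (\sum_(D in diffFamily F) \sum_(0 <= l < k) (#|D| == l))%N.
    by apply: eq_bigr => D HD; rewrite sum_eq_lt Hsz.
  rewrite exchange_big; apply: eq_bigr => l _.
  rewrite /diffFamilyL -sum1_card.
  rewrite (big_mkcond (fun D => D \in _)) /=.
  rewrite [in RHS]big_mkcond /=; apply: eq_bigr => D _; rewrite inE; by case: (D \in diffFamily F); case: (#|D| == l).
rewrite E.
have -> : k = (k.-1).+1 by lia.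
rewrite big_nat_recr //= addnC leq_add2l /=.
apply: leq_sum => l _.
have := card_draws 'I_n l. rewrite card_ord => <-.
apply: subset_leq_card; apply/subsetP => D; rewrite !inE; by case/andP.
Qed.
Section R. Local Open Scope ring_scope.
Lemma rat_g1 (x z dd nn kk : rat) : 0 < kk -> 0 < nn - kk ->
  x * (nn - kk)^+2 <= kk^+2 * z -> z < dd + 2 * x ->
  (1 - 2 / (nn / kk - 1) ^+ 2) * z < dd.
Proof.
move=> kp nkp h1 h2.
have -> : nn / kk - 1 = (nn - kk) / kk by field; lra.
have e : (1 - 2 / ((nn - kk) / kk) ^+ 2) * z = z - 2 * (kk^+2 * z / (nn - kk)^+2).
  by field; apply/andP; split; lra.
rewrite e.
have : x <= kk ^+ 2 * z / (nn - kk) ^+ 2 by rewrite ler_pdivlMr ?exprn_gt0.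
lra.
Qed.

Lemma rat_g2 (x y z dd nn kk : rat) : 0 < kk -> 0 < nn ->
  (nn - 2 * kk) * y + 2 * nn * x <= 2 * kk * z -> z <= dd + 2 * x ->
  (1 - 2 / (nn / kk)) * (y + z) <= dd.
Proof.
move=> kp np h1 h2.
have e : (1 - 2 / (nn / kk)) * (y + z) = (y + z) - (2 * kk * (y + z)) / nn.
  by field; apply/andP; split; lra.
rewrite e.
have : (nn - 2 * kk) * (y + z) <= nn * (z - 2 * x) by lra.
move=> h3.
have : y + z - (z - 2 * x) <= 2 * kk * (y + z) / nn.
  rewrite ler_pdivlMr //. lra.
lra.
Qed.
End R.

Lemma key n k d : (0 < k)%N -> (0 < n)%N ->
  (\sum_(0 <= l < k) 'C(n.-1, l) < d + \sum_(0<=l<k.-1) 'C(n,l))%N ->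
  ('C(n.-1, k.-1) < d + \sum_(0<=l<k.-2) 'C(n.-1,l))%N.
Proof.
case: n => [//|N]; case: k => [//|[|m]] _ _ /=.
  by rewrite big_nat1 !big_geq.
rewrite big_nat_recr //= pascal_sum. lia.
Qed.

Theorem mainTheorem7 (n k : nat) (F : {set {set 'I_n}}) :
  (0 < k)%N -> (0 < n)%N -> (3 * k <= n)%N ->
  (forall A, A \in F -> #|A| = k) ->
  intersecting F ->
  (\sum_(0 <= l < k) 'C(n.-1, l) < #|diffFamily F|)%N ->
  let C : rat := (n%:R / k%:R)%R in
  ((1 - 2 / (C - 1) ^+ 2) * ('C(n.-1, k.-1))%:R < (#|diffFamilyL F k.-1|)%:R)%R /\
  ((1 - 2 / C) * ('C(n, k.-1))%:R <= (#|diffFamilyL F k.-1|)%:R)%R.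
Proof.
move=> k0 n0 h3 Hk Hi Hd C.
have Hb := D_bound k0 Hk Hi.
move: (#|diffFamilyL F k.-1|) Hb => d Hb.
have Hkey := key k0 n0 (leq_trans Hd Hb).
rewrite /C; clear C Hd Hb Hi Hk.
case: (leqP k 2) => hk.
  have Hz : ('C(n.-1, k.-1) < d)%N.
    by move: Hkey; case: k k0 hk h3 => [//|[|[|//]]] _ _ _ /=; rewrite big_geq // addn0.
  have HW : ('C(n, k.-1) <= d)%N.
    case: k k0 hk h3 Hkey Hz => [//|[|[|//]]] _ _ h3 /= + _.
      rewrite big_geq // !bin0 => ?; lia.
    rewrite big_geq // !bin1; lia.
  have t1 : (0 <= 2 / ((n%:R / k%:R : rat) - 1) ^+ 2 :> rat)%R.
    by apply: divr_ge0 => //; apply: sqr_ge0.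
  have t2 : (0 <= 2 / (n%:R / k%:R : rat) :> rat)%R.
    by apply: divr_ge0 => //; apply: divr_ge0.
  have : ('C(n.-1, k.-1)%:R < d%:R :> rat)%R by rewrite ltr_nat.
  have : ('C(n, k.-1)%:R <= d%:R :> rat)%R by rewrite ler_nat.
  have : (0 <= 'C(n.-1, k.-1)%:R :> rat)%R by [].
  have : (0 <= 'C(n, k.-1)%:R :> rat)%R by [].
  move: ('C(n.-1, k.-1)%:R : rat) ('C(n, k.-1)%:R : rat) => z w.
  move=> w0 z0 h1 h2; split; nra.
have [a ea] : exists a, k = (a + 3)%N by exists (k - 3)%N; lia.
subst k.
have [P eP] : exists P, n = (P + 3 * (a + 3))%N by exists (n - 3 * (a+3))%N; lia.
subst n.
have eN : (P + 3 * (a + 3)).-1 = (P + 3 * a + 8)%N by lia.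
have ek : (a + 3).-1 = (a + 2)%N by lia.
have ek2 : (a + 3).-2 = (a + 1)%N by lia.
rewrite ek2 eN ek in Hkey; rewrite eN ek.
have Ht := tail_bound (N := (P + 3 * a + 8)%N) (m := a) ltac:(lia).
set X := 'C(P + 3 * a + 8, a) in Ht.
set Y := 'C(P + 3 * a + 8, a.+1).
set Z := 'C(P + 3 * a + 8, a + 2).
have h1 : ((a + 1) * Y = (P + 2 * a + 8) * X)%N.
  rewrite /Y /X addn1 mul_bin_left; congr (_ * _)%N; lia.
have h2 : ((a + 2) * Z = (P + 2 * a + 7) * Y)%N.
  rewrite /Y /Z (_ : (a + 2) = a.+1.+1)%N ?mul_bin_left; last lia.
  congr (_ * _)%N; lia.
have eW : 'C(P + 3 * (a + 3), a + 2) = (Y + Z)%N.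
  rewrite (_ : (P + 3 * (a + 3)) = (P + 3 * a + 8).+1)%N; last lia.
  rewrite (_ : (a + 2) = a.+2)%N; last lia.
  by rewrite binS addnC /Z addn2.
rewrite eW.
have i1 := ineq1 h1 h2.
have i2 := ineq2 h1 h2.
have hd : (Z < d + 2 * X)%N.
  rewrite addn1 in Hkey. lia.
split.
- apply: (@rat_g1 X%:R); rewrite ?ltr0n //.
  + rewrite -natrB; last lia. by rewrite ltr0n; lia.
  + rewrite -natrB; last lia.
    rewrite -!natrX -!natrM ler_nat.
    rewrite (_ : (P + 3 * (a + 3) - (a + 3)) = (P + 2 * a + 6))%N; last lia.
    exact: i1.
  + have : (Z%:R < (d + 2 * X)%:R :> rat)%R by rewrite ltr_nat.
    by rewrite natrD natrM.
- rewrite [((Y + Z)%:R)%R]natrD; apply: (@rat_g2 X%:R); rewrite ?ltr0n //; try lia.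
  + rewrite -natrM -natrB; last lia.
    rewrite -!natrM -natrD ler_nat.
    rewrite (_ : (P + 3 * (a + 3) - 2 * (a + 3)) = (P + a + 3))%N; last lia.
    rewrite (_ : (P + 3 * (a + 3)) = (P + 3 * a + 9))%N; last lia.
    exact: i2.
  + have : (Z%:R <= (d + 2 * X)%:R :> rat)%R by rewrite ler_nat; lia.
    by rewrite natrD natrM.
Qed.
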